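(* In the qubit system ($d=2$, $\mathcal H=\mathbb C^2$), for every $\alpha\in(1,2)$ and $\beta\in(-\infty,0)\cup(0,1)$ there exist a unitary $U_0$ on $\mathbb C^2$ and a pure input state $|\psi_0\rangle\in\mathbb C^2$ such that $$M_{\alpha,\beta}(U_0|\psi_0\rangle\langle\psi_0|U_0^\dagger)-M_{\alpha,\beta}(|\psi_0\rangle\langle\psi_0|)>\mathcal M_{\alpha,\beta}(U_0).$$
   Context: For a qubit, the pure stabilizer states are $|0\rangle,|1\rangle,|\pm\rangle=(|0\rangle\pm|1\rangle)/\sqrt2,|\pm i\rangle=(|0\rangle\pm i|1\rangle)/\sqrt2$ (up to global phase), and stabilizer states ($\mathcal S$) are their convex combinations. For $\alpha\in(0,1)\cup(1,\infty)$, $\beta\in(-\infty,0)\cup(0,\infty)$: $S_{\alpha,\beta}(\rho)=\frac{1}{(1-\alpha)\beta}[(\mathrm{Tr}\rho^\alpha)^\beta-1]$, $J_{\alpha,\beta}(\rho,\sigma)=S_{\alpha,\beta}(\tfrac{\rho+\sigma}{2})-\tfrac12S_{\alpha,\beta}(\rho)-\tfrac12S_{\alpha,\beta}(\sigma)$; for a pure state $M_{\alpha,\beta}(|\psi\rangle\langle\psi|)=\min_{|\phi\rangle}J_{\alpha,\beta}(|\psi\rangle\langle\psi|,|\phi\rangle\langle\phi|)$ over pure stabilizer states $|\phi\rangle$, and for general $\rho$, $M_{\alpha,\beta}(\rho)=\min\sum_jp_jM_{\alpha,\beta}(|\psi_j\rangle\langle\psi_j|)$ over pure-state decompositions of $\rho$.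 The magic generating power of a unitary $U$ is $\mathcal M_{\alpha,\beta}(U)=\max_{\rho\in\mathcal S}M_{\alpha,\beta}(U\rho U^\dagger)$. *)

(* Defs.v *)
From mathcomp Require Import all_boot all_order all_algebra.
From mathcomp Require Import complex.
From mathcomp Require Import all_classical all_reals exp.
Set Implicit Arguments. Unset Strict Implicit. Unset Printing Implicit Defensive.
Import Order.TTheory GRing.Theory Num.Theory.
Local Open Scope ring_scope.
Local Open Scope classical_set_scope.
Local Open Scope complex_scope.

Section Qubit.
Variable R : realType.
Local Notation C := (R[i]).

Definition adj m n (A : 'M[C]_(m, n)) : 'M[C]_(n, m) := map_mx Num.conj A^T.

Definition unitary (U : 'M[C]_2) : Prop := U *m adj U = 1%:M.

Definition unit_vec (v : 'cV[C]_2) : Prop := adj v *m v = 1%:M.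

Definition proj (v : 'cV[C]_2) : 'M[C]_2 := v *m adj v.

Definition ket (a b : C) : 'cV[C]_2 :=
  \col_(i < 2) (if nat_of_ord i == 0%N then a else b).

Definition s2 : C := ((Num.sqrt (2 : R))^-1)%:C.

(* the six pure single-qubit stabilizer states |0>,|1>,|+>,|->,|+i>,|-i> *)
Definition stab_kets : seq 'cV[C]_2 :=
  [:: ket 1 0; ket 0 1; ket s2 s2; ket s2 (- s2);
      ket s2 (s2 * 'i); ket s2 (- (s2 * 'i))].

Definition stab_ket (k : 'I_6) : 'cV[C]_2 := nth 0 stab_kets k.

(* Spectrum of a 2x2 Hermitian matrix A: the two roots of its characteristic
   polynomial X^2 - tr(A) X + det(A) (real for Hermitian A). *)
Definition eig_disc (A : 'M[C]_2) : R :=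
  (complex.Re (\tr A)) ^+ 2 - 4 * complex.Re (\det A).
Definition eig_plus (A : 'M[C]_2) : R := (complex.Re (\tr A) + Num.sqrt (eig_disc A)) / 2.
Definition eig_minus (A : 'M[C]_2) : R := (complex.Re (\tr A) - Num.sqrt (eig_disc A)) / 2.

(* Tr rho^alpha = sum of lambda^alpha over the eigenvalues of rho *)
Definition trpow (alpha : R) (rho : 'M[C]_2) : R :=
  eig_plus rho `^ alpha + eig_minus rho `^ alpha.

Definition Sab (alpha beta : R) (rho : 'M[C]_2) : R :=
  ((trpow alpha rho) `^ beta - 1) / ((1 - alpha) * beta).

Definition Jab (alpha beta : R) (rho sigma : 'M[C]_2) : R :=
  Sab alpha beta ((2 : C)^-1 *: (rho + sigma))
  - Sab alpha beta rho / 2 - Sab alpha beta sigma / 2.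

Definition Mpure (alpha beta : R) (psi : 'cV[C]_2) : R :=
  \big[Num.min/Jab alpha beta (proj psi) (proj (stab_ket ord0))]_(k < 6)
     Jab alpha beta (proj psi) (proj (stab_ket k)).

Definition is_decomp (rho : 'M[C]_2) (n : nat) (p : 'I_n -> R)
    (psi : 'I_n -> 'cV[C]_2) : Prop :=
  (forall j, 0 <= p j) /\ \sum_(j < n) p j = 1 /\
  (forall j, unit_vec (psi j)) /\
  rho = \sum_(j < n) (p j)%:C *: proj (psi j).

Definition Mmix (alpha beta : R) (rho : 'M[C]_2) : R :=
  inf [set x : R | exists n (p : 'I_n -> R) (psi : 'I_n -> 'cV[C]_2),
         is_decomp rho p psi /\ x = \sum_(j < n) p j * Mpure alpha beta (psi j)].

Definition is_stab (rho : 'M[C]_2) : Prop :=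
  exists q : 'I_6 -> R, (forall k, 0 <= q k) /\ \sum_(k < 6) q k = 1 /\
    rho = \sum_(k < 6) (q k)%:C *: proj (stab_ket k).

Definition MGP (alpha beta : R) (U : 'M[C]_2) : R :=
  sup [set x : R | exists rho, is_stab rho /\
         x = Mmix alpha beta (U *m rho *m adj U)].

End Qubit.

(* Main.v *)
Require Import Defs.
From mathcomp Require Import all_boot all_order all_algebra.
From mathcomp Require Import complex.
From mathcomp Require Import all_classical all_reals exp.
From mathcomp Require Import ring lra.
Import Order.TTheory GRing.Theory Num.Theory.
Local Open Scope ring_scope.
Local Open Scope complex_scope.
Set Implicit Arguments. Unset Strict Implicit.

Lemma det2 (R : realType) (A : 'M[R[i]]_2) : \det A = A 0 0 * A 1 1 - A 0 1 * A 1 0.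
Proof.
rewrite (expand_det_row _ 0) !big_ord_recl big_ord0 /cofactor !det_mx11 !mxE /=.
rewrite addr0 expr0 expr1 !mul1r mulN1r mulrN.
f_equal. all: repeat f_equal. all: try apply: val_inj. all: reflexivity.
Qed.
Lemma tr2 (R : realType) (A : 'M[R[i]]_2) : \tr A = A 0 0 + A 1 1.
Proof. rewrite /mxtrace !big_ord_recl big_ord0 addr0. by do 2 f_equal; apply: val_inj. Qed.

Lemma projE (R : realType) (a b : R[i]) i j :
  Defs.proj (ket a b) i j = (if nat_of_ord i == 0%N then a else b) * Num.conj (if nat_of_ord j == 0%N then a else b).
Proof. by rewrite /proj /adj !mxE big_ord1 !mxE. Qed.

Lemma inv2C (R : realType) : (2 : R[i])^-1 = (2^-1 : R)%:C.
Proof. by rewrite -(rmorph_nat (real_complex R)) fmorphV. Qed.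

Lemma mixRe (R : realType) (x1 y1 x2 y2 z1 w1 z2 w2 : R) :
 let M := (2:R[i])^-1 *: (Defs.proj (ket (x1+i*y1) (x2+i*y2)) + Defs.proj (ket (z1+i*w1) (z2+i*w2))) in
 complex.Re (\tr M) = (x1^+2+y1^+2+x2^+2+y2^+2 + (z1^+2+w1^+2+z2^+2+w2^+2))/2 /\
 complex.Re (\det M) = ((x1^+2+y1^+2+x2^+2+y2^+2)*(z1^+2+w1^+2+z2^+2+w2^+2)
     - ((x1*z1 + y1*w1 + x2*z2 + y2*w2)^+2 + (x1*w1 - y1*z1 + x2*w2 - y2*z2)^+2))/4.
Proof.
move=> M; rewrite /M tr2 det2 !mxE !big_ord1 !mxE inv2C /=.
by split; field.
Qed.

Lemma pureRe (R : realType) (x1 y1 x2 y2 : R) :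
 let M := Defs.proj (ket (x1+i*y1) (x2+i*y2)) in
 complex.Re (\tr M) = x1^+2+y1^+2+x2^+2+y2^+2 /\ complex.Re (\det M) = 0.
Proof. move=> M; rewrite /M tr2 det2 !mxE !big_ord1 !mxE /=. by split; ring. Qed.

Lemma ln_ge (R : realType) (y : R) : 0 < y -> 1 - y^-1 <= ln y.
Proof.
move=> y0.
have h := @le_ln1Dx R (y^-1 - 1).
have : -1 < y^-1 - 1 by have := invr_gt0 y; rewrite y0 => /= hh; lra.
move=> /h; rewrite addrC subrK lnV ?posrE //.
by rewrite lerNl opprB.
Qed.

Lemma pow_ge_ln (R : realType) (g b : R) : 0 < g -> 1 + b * ln g <= g `^ b.
Proof. by move=> g0; rewrite /powR gt_eqF // expR_ge1Dx. Qed.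

Lemma bern_ge (R : realType) (y r : R) : 0 <= y -> 1 <= r -> 1 + r * (y - 1) <= y `^ r.
Proof.
move=> y0 r1; have r0 : 0 < r by apply: lt_le_trans r1.
case: (ltgtP y 0) y0 => // [y0 _|->].
- rewrite -(mulr_powRB1 (ltW y0) r0).
  have h1 := pow_ge_ln (r - 1) y0.
  have h2 := ln_ge y0.
  have h3 : (r - 1) * (1 - y^-1) <= (r - 1) * ln y by apply: ler_wpM2l; rewrite ?subr_ge0.
  have h4 : y * (1 + (r - 1) * (1 - y^-1)) <= y * y `^ (r - 1).
    rewrite ler_pM2l //; apply: (le_trans _ h1); by rewrite lerD2l.
  apply: le_trans h4; rewrite le_eqVlt; apply/orP; left; apply/eqP.
  by field; rewrite gt_eqF.
- rewrite powR0 ?gt_eqF //; lra.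
Qed.

Lemma bern_le (R : realType) (y s : R) : 0 <= y -> 0 < s -> s <= 1 -> y `^ s <= 1 + s * (y - 1).
Proof.
move=> y0 s0 s1.
have z0 : 0 <= y `^ s := powR_ge0 _ _.
have r1 : 1 <= s^-1 by rewrite invf_ge1.
have := bern_ge z0 r1.
rewrite -powRrM mulfV ?gt_eqF // powRr1 //.
move=> h.
have : s * (1 + s^-1 * (y `^ s - 1)) <= s * y by rewrite ler_pM2l.
rewrite mulrDr mulrA mulfV ?gt_eqF // mul1r => h'.
lra.
Qed.

Lemma powR_neg_lt (R : realType) (b u v : R) : b < 0 -> 0 < u -> u < v -> v `^ b < u `^ b.
Proof.
move=> b0 u0 uv; have v0 : 0 < v by apply: lt_trans uv.
have e : forall x, x `^ b = (x `^ (-b))^-1 by move=> x; rewrite -powRN opprK.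
rewrite (e v) (e u) ltf_pV2 ?posrE ?powR_gt0 //.
have := @gt0_ltr_powR R (-b); rewrite oppr_gt0 => /(_ b0 u v).
by rewrite !nnegrE => /(_ (ltW u0) (ltW v0) uv).
Qed.

Lemma powR_neg_le (R : realType) (b u v : R) : b < 0 -> 0 < u -> u <= v -> v `^ b <= u `^ b.
Proof.
move=> b0 u0; rewrite le_eqVlt => /orP [/eqP -> //|uv].
by apply: ltW; apply: powR_neg_lt.
Qed.

Definition Fb (R : realType) (alpha beta g : R) := (g `^ beta - 1) / ((1 - alpha) * beta).
Definition Gc (R : realType) (alpha c : R) := ((1 + c)/2) `^ alpha + ((1 - c)/2) `^ alpha.

Lemma Fb_anti (R : realType) (alpha beta g h : R) : 1 < alpha -> beta != 0 ->
  0 < g -> g <= h -> Fb alpha beta h <= Fb alpha beta g.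
Proof.
move=> a1 b0 g0 gh; rewrite /Fb.
case: (ltgtP beta 0) b0 => // bs _.
- have D0 : 0 < (1 - alpha) * beta by rewrite nmulr_lgt0 // subr_lt0.
  rewrite ler_pM2r ?invr_gt0 // lerD2r; exact: powR_neg_le.
- have D0 : (1 - alpha) * beta < 0 by rewrite nmulr_rlt0 // subr_lt0.
  rewrite ler_nM2r ?invr_lt0 // lerD2r.
  have h0 : 0 < h by apply: lt_le_trans gh.
have := @ge0_ler_powR R beta (ltW bs) g h; rewrite !nnegrE.
by move=> /(_ (ltW g0) (ltW h0) gh).
Qed.

Lemma Fb1 (R : realType) (alpha beta : R) : Fb alpha beta 1 = 0.
Proof. by rewrite /Fb powR1 subrr mul0r. Qed.

Lemma Fb_main (R : realType) (alpha beta Gn G1 : R) : 1 < alpha -> beta < 1 -> beta != 0 ->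
  0 < Gn -> 0 < G1 -> G1 <= 1 -> 2 * (1 - G1) < G1 * (1 - Gn) ->
  2 * Fb alpha beta G1 < Fb alpha beta Gn.
Proof.
move=> a1 b1 b0 gn0 g10 g11 key; rewrite /Fb.
have hGn : 0 < 1 - Gn.
  have : 0 <= 2 * (1 - G1) by rewrite mulr_ge0 // subr_ge0.
  move=> h; have := le_lt_trans h key; rewrite pmulr_rgt0 //.
case: (ltgtP beta 0) b0 => // bs _.
- have D0 : 0 < (1 - alpha) * beta by rewrite nmulr_lgt0 // subr_lt0.
  rewrite mulrA ltr_pM2r ?invr_gt0 //.
  have hlt : Gn < G1 * G1 by nra.
  have := powR_neg_lt bs gn0 hlt.
  rewrite powRM ?ltW // => hP.
  set P := Gn `^ beta in hP *; set Q := G1 `^ beta in hP *.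
  have hq : 0 <= (Q - 1) ^+ 2 := sqr_ge0 _.
  nra.
- have D0 : (1 - alpha) * beta < 0 by rewrite nmulr_rlt0 ?subr_lt0.
  rewrite mulrA ltr_nM2r ?invr_lt0 //.
  have hP := bern_le (ltW gn0) bs (ltW b1).
  have hQ1 := pow_ge_ln beta g10.
  have hQ2 := ln_ge g10.
  set P := Gn `^ beta in hP *; set Q := G1 `^ beta in hQ1 *.
  have hQ : 1 + beta * (1 - G1^-1) <= Q.
    apply: (le_trans _ hQ1); rewrite lerD2l; apply: ler_wpM2l => //; exact: ltW.
  have hQ' : G1 + beta * (G1 - 1) <= G1 * Q.
    have := ler_wpM2l (ltW g10) hQ.
    have -> : G1 * (1 + beta * (1 - G1^-1)) = G1 + beta * (G1 - 1) by field; rewrite gt_eqF.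
    done.
  have k1 : 2 * (1 - G1) * beta < G1 * (1 - Gn) * beta by rewrite ltr_pM2r.
  have k2 : G1 * (2 * (1 - Q)) < G1 * (beta * (1 - Gn)) by nra.
  rewrite ltr_pM2l // in k2.
  nra.
Qed.
Definition nrm (R : realType) (a1 a2 : R[i]) : R := complex.Re (a1 * Num.conj a1 + a2 * Num.conj a2).
Definition ovw (R : realType) (a1 a2 b1 b2 : R[i]) : R :=
  let o := Num.conj a1 * b1 + Num.conj a2 * b2 in complex.Re o ^+ 2 + complex.Im o ^+ 2.

Lemma Sab_pure (R : realType) (alpha beta : R) (a1 a2 : R[i]) :
  alpha != 0 -> nrm a1 a2 = 1 -> Sab alpha beta (Defs.proj (ket a1 a2)) = 0.
Proof.
move=> a0; case: a1 => x1 y1; case: a2 => x2 y2; rewrite /nrm /= => hn.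
have [ht hd] := pureRe x1 y1 x2 y2.
rewrite /Sab /trpow /eig_plus /eig_minus /eig_disc ht hd.
have -> : x1 ^+ 2 + y1 ^+ 2 + x2 ^+ 2 + y2 ^+ 2 = 1 by rewrite -hn; ring.
rewrite expr1n mulr0 subr0 sqrtr1 subrr mul0r powR0 // addr0.
have -> : (1 + 1) / 2 = 1 :> R by field.
by rewrite !powR1 subrr mul0r.
Qed.

Lemma Jab_ket (R : realType) (alpha beta : R) (a1 a2 b1 b2 : R[i]) :
  alpha != 0 -> nrm a1 a2 = 1 -> nrm b1 b2 = 1 ->
  Jab alpha beta (Defs.proj (ket a1 a2)) (Defs.proj (ket b1 b2)) =
  Fb alpha beta (Gc alpha (Num.sqrt (ovw a1 a2 b1 b2))).
Proof.
move=> a0 h1 h2; rewrite /Jab (@Sab_pure _ _ beta _ _ a0 h1) (@Sab_pure _ _ beta _ _ a0 h2) !mul0r !subr0.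
move: h1 h2; case: a1 => x1 y1; case: a2 => x2 y2; case: b1 => z1 w1; case: b2 => z2 w2.
rewrite /nrm /ovw /= => h1 h2.
have [ht hd] := mixRe x1 y1 x2 y2 z1 w1 z2 w2.
have E1 : (x1 ^+ 2 + y1 ^+ 2 + x2 ^+ 2 + y2 ^+ 2) = 1 by rewrite -h1; ring.
have E2 : (z1 ^+ 2 + w1 ^+ 2 + z2 ^+ 2 + w2 ^+ 2) = 1 by rewrite -h2; ring.
rewrite /Sab /trpow /eig_plus /eig_minus /eig_disc ht hd /Fb /Gc E1 E2.
have -> : (1 + 1) / 2 = 1 :> R by field.
have -> : 1 ^+ 2 - 4 * ((1 * 1 - ((x1 * z1 + y1 * w1 + x2 * z2 + y2 * w2) ^+ 2 +
    (x1 * w1 - y1 * z1 + x2 * w2 - y2 * z2) ^+ 2)) / 4) =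
   (x1 * z1 - - y1 * w1 + (x2 * z2 - - y2 * w2)) ^+ 2 +
         (x1 * w1 + - y1 * z1 + (x2 * w2 + - y2 * z2)) ^+ 2 by field.
done.
Qed.

Lemma Gc_le (R : realType) (alpha c : R) : 1 < alpha -> alpha <= 2 -> 0 <= c -> c <= 1 ->
  Gc alpha c <= 1 - (alpha - 1) * ((1 - c) / 2).
Proof.
move=> a1 a2 c0 c1; rewrite /Gc.
set p := (1 + c) / 2; set q := (1 - c) / 2.
have p0 : 0 <= p by rewrite /p; lra.
have q0 : 0 <= q by rewrite /q; lra.
have qp : q <= p by rewrite /p /q; lra.
have a0 : 0 < alpha by apply: lt_trans a1.
rewrite -(mulr_powRB1 p0 a0) -(mulr_powRB1 q0 a0).
have hq : q `^ (alpha - 1) <= p `^ (alpha - 1).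
  have := @ge0_ler_powR R (alpha - 1); rewrite subr_ge0 (ltW a1) => /(_ isT q p).
  by rewrite !nnegrE => /(_ q0 p0 qp).
have hp : p `^ (alpha - 1) <= 1 + (alpha - 1) * (p - 1).
  apply: bern_le => //; [by rewrite subr_gt0 | lra].
have : q * q `^ (alpha - 1) <= q * p `^ (alpha - 1) by apply: ler_wpM2l.
have -> : 1 - (alpha - 1) * ((1 - c) / 2) = 1 + (alpha - 1) * (p - 1) by rewrite /p; field.
have hpq : p + q = 1 by rewrite /p /q; field.
move=> h; set t := p `^ (alpha - 1) in hp h *.
have e : p * t + q * t = t by rewrite -mulrDl hpq mul1r.
apply: (le_trans _ hp); rewrite -[X in _ <= X]e; by rewrite lerD2l.
Qed.

Lemma Gc_gt0 (R : realType) (alpha c : R) : -1 < c -> 0 < Gc alpha c.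
Proof.
move=> c1; rewrite /Gc.
have h : 0 < (1 + c) / 2 by lra.
have := powR_gt0 alpha h; have := powR_ge0 ((1 - c) / 2) alpha.
move=> u v; exact: lt_le_trans v (ler_wpDr u (lexx _)).
Qed.
Arguments Gc_gt0 {R} alpha {c}.

Lemma Gc_ge (R : realType) (alpha c : R) : 1 <= alpha -> -1 <= c -> 1 - alpha * ((1 - c) / 2) <= Gc alpha c.
Proof.
move=> a1 c1; rewrite /Gc.
have := @bern_ge R ((1 + c) / 2) alpha; rewrite a1 => /(_ _ isT) h.
have hc : 0 <= (1 + c) / 2 by lra.
have {}h := h hc.
have hq := powR_ge0 ((1 - c) / 2) alpha.
apply: le_trans (_ : _ <= ((1 + c) / 2) `^ alpha) _.
  apply: le_trans h; rewrite le_eqVlt; apply/orP; left; apply/eqP; field.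
  by [].
by rewrite -[X in X <= _]addr0 lerD2l.
Qed.
Definition Umat (R : realType) (a b : R) : 'M[R[i]]_2 :=
  \matrix_(i < 2, j < 2) (if nat_of_ord i == 0%N then (if nat_of_ord j == 0%N then a%:C else (- b)%:C)
                          else (if nat_of_ord j == 0%N then b%:C else a%:C)).

Lemma ord2_cases (i : 'I_2) : nat_of_ord i = 0%N \/ nat_of_ord i = 1%N.
Proof. case: i => [[|[|//]] ?] /=; by [left|right]. Qed.

Lemma Umul (R : realType) (a b : R) (u v : R[i]) :
  Umat a b *m ket u v = ket (a%:C * u + (- b)%:C * v) (b%:C * u + a%:C * v).
Proof.
apply/matrixP => i j; rewrite !mxE big_ord_recl big_ord1 !mxE /=.
by case: (ord2_cases i) => ->.
Qed.

Lemma adjM (R : realType) m n p (A : 'M[R[i]]_(m, n)) (B : 'M[R[i]]_(n, p)) :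
  adj (A *m B) = adj B *m adj A.
Proof. by rewrite /adj trmx_mul map_mxM. Qed.

Lemma unit_ket (R : realType) (a1 a2 : R[i]) : nrm a1 a2 = 1 -> unit_vec (ket a1 a2).
Proof.
case: a1 => x1 y1; case: a2 => x2 y2; rewrite /nrm /= => h.
apply/matrixP => i j; rewrite !mxE big_ord_recl big_ord1 !mxE /=.
rewrite !ord1 /=; apply/eqP; rewrite eq_complex /=; apply/andP; split; apply/eqP.
  by rewrite -h; ring.
by ring.
Qed.

Lemma Umat_unitary (R : realType) (a b : R) : a ^+ 2 + b ^+ 2 = 1 -> unitary (Umat a b).
Proof.
move=> h; apply/matrixP => i j; rewrite !mxE big_ord_recl big_ord1 !mxE -val_eqE /=.
case: (ord2_cases i) => ->; case: (ord2_cases j) => -> /=; rewrite ?mulr1n ?mulr0n;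
 apply/eqP; rewrite eq_complex /=; apply/andP; split; apply/eqP.
all: first [ring | by rewrite -h; ring].
Qed.

Lemma Jab_val (R : realType) (alpha beta : R) (a1 a2 b1 b2 : R[i]) (c : R) :
  alpha != 0 -> nrm a1 a2 = 1 -> nrm b1 b2 = 1 -> ovw a1 a2 b1 b2 = c ^+ 2 -> 0 <= c ->
  Jab alpha beta (Defs.proj (ket a1 a2)) (Defs.proj (ket b1 b2)) = Fb alpha beta (Gc alpha c).
Proof. move=> a0 h1 h2 hw c0. rewrite (Jab_ket beta a0 h1 h2). rewrite hw. rewrite sqrtr_sqr. rewrite ger0_norm //. Qed.

Lemma Jab_lb (R : realType) (alpha beta Gn : R) (u1 u2 v1 v2 : R[i]) :
  1 < alpha -> alpha <= 2 -> beta != 0 -> nrm u1 u2 = 1 -> nrm v1 v2 = 1 ->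
  ovw u1 u2 v1 v2 <= (24/25) ^+ 2 -> 1 - (alpha - 1) / 50 <= Gn ->
  Fb alpha beta Gn <= Jab alpha beta (Defs.proj (ket u1 u2)) (Defs.proj (ket v1 v2)).
Proof.
move=> a1 a2' b0 h1 h2 hw hG.
have a0 : alpha != 0 by rewrite gt_eqF // (lt_trans ltr01 a1).
rewrite (Jab_ket beta a0 h1 h2).
set c := Num.sqrt _.
have c0 : 0 <= c by exact: sqrtr_ge0.
have c1 : c <= 24/25.
  have e : (24/25 : R) = Num.sqrt ((24/25)^+2) by rewrite sqrtr_sqr ger0_norm // divr_ge0.
  by rewrite /c [X in _ <= X]e ler_sqrt // sqr_ge0.
have c1' : c <= 1 by apply: (le_trans c1); lra.
have cg : 0 < Gc alpha c by apply: Gc_gt0; lra.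
apply: (Fb_anti a1 b0 cg).
apply: le_trans (Gc_le a1 a2' c0 c1') _.
have s0 : 0 <= alpha - 1 by rewrite subr_ge0 ltW.
apply: le_trans hG; rewrite lerD2l lerN2.
have h' : 1/50 <= (1 - c) / 2 by lra.
have := ler_wpM2l s0 h'.
by rewrite mul1r.
Qed.
Lemma xfacts (R : realType) (s : R) : 0 < s -> s <= 1 ->
  0 < ((1/100) * s) `^ (s^-1) /\ ((1/100) * s) `^ (s^-1) <= (1/100) * s /\
  (((1/100) * s) `^ (s^-1)) `^ s = (1/100) * s.
Proof.
move=> s0 s1; have ds0 : 0 < (1/100) * s by apply: mulr_gt0 => //; lra.
split; first exact: powR_gt0.
split.
  apply: ge1r_powR; last by rewrite invf_ge1.
  apply/andP; split => //; lra.
by rewrite -powRrM mulVf ?gt_eqF // powRr1 // ltW.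
Qed.

Lemma key_ineq (R : realType) (alpha x q G1 : R) : 1 < alpha -> alpha <= 2 -> 0 < x -> x <= 1/100 ->
  0 <= q -> q <= (x + x ^+ 2) / 4 -> 1 - alpha * q <= G1 -> G1 <= 1 ->
  2 * (1 - G1) < G1 * (1 - ((1 - x) * (1 - (alpha - 1) * x) + x * ((1/100) * (alpha - 1)))).
Proof.
move=> a1 a2 x0 x1 q0 q1 g1 g2.
set K := alpha - (alpha - 1) * x - (alpha - 1) / 100.
have eK : 1 - ((1 - x) * (1 - (alpha - 1) * x) + x * ((1/100) * (alpha - 1))) = x * K.
  by rewrite /K; field.
rewrite eK.
have hK : alpha - 2/100 <= K.
  rewrite /K.
  have : (alpha - 1) * x <= 1/100 by nra.
  have : (alpha - 1) / 100 <= 1/100 by lra.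
  lra.
have hq : alpha * q <= 1/100.
  have : q <= 1/200 by nra.
  nra.
have hL : 0 < 1 - alpha * q by lra.
have h1 : (1 - alpha * q) * (x * K) <= G1 * (x * K).
  apply: ler_wpM2r; last by [].
  apply: mulr_ge0; lra.
apply: lt_le_trans h1.
have h2 : 2 * (1 - G1) <= 2 * (alpha * q) by lra.
apply: le_lt_trans h2 _.
have h3 : 2 * (alpha * q) <= alpha * (x + x ^+ 2) / 2.
  have := ler_wpM2l (ltW (lt_trans ltr01 a1)) q1; lra.
apply: le_lt_trans h3 _.
have hx2 : x ^+ 2 <= x / 100 by rewrite expr2; nra.
have h4 : alpha * (x + x ^+ 2) / 2 <= alpha * x * (101/200).
  have : x + x ^+ 2 <= x * (101/100) by lra.
  move=> h; have := ler_wpM2l (ltW (lt_trans ltr01 a1)) h; lra.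
apply: le_lt_trans h4 _.
have h5 : (1 - 1/100) * (x * (alpha - 2/100)) <= (1 - alpha * q) * (x * K).
  apply: ler_pM; [lra | apply: mulr_ge0; lra | lra | ].
  apply: ler_wpM2l; lra.
apply: lt_le_trans h5.
nra.
Qed.
Lemma Mpure_eq (R : realType) (alpha beta : R) (psi : 'cV[R[i]]_2) :
  let J := fun v => Jab alpha beta (Defs.proj psi) (Defs.proj v) in
  Mpure alpha beta psi = Num.min (J (ket 1 0)) (Num.min (J (ket 0 1)) (Num.min (J (ket (s2 R) (s2 R)))
   (Num.min (J (ket (s2 R) (- s2 R))) (Num.min (J (ket (s2 R) (s2 R * 'i)))
   (Num.min (J (ket (s2 R) (- (s2 R * 'i)))) (J (ket 1 0))))))).
Proof. by rewrite /Mpure !big_ord_recl big_ord0 /stab_ket /=. Qed.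
Lemma hr2 (R : realType) : ((Num.sqrt (2:R))^-1) ^+ 2 = 1/2.
Proof. by rewrite exprVn sqr_sqrtr // mul1r. Qed.

Lemma stab_unit (R : realType) (k : 'I_6) : unit_vec (stab_ket R k).
Proof.
have hr := hr2 R.
case: k => [[|[|[|[|[|[|//]]]]]] hk]; rewrite /stab_ket /s2 /=; apply: unit_ket; rewrite /nrm /=.
all: try ring.
all: move: hr; set r := (Num.sqrt (2:R))^-1 => hr; lra.
Qed.

Lemma unit_U (R : realType) (U : 'M[R[i]]_2) (v : 'cV[R[i]]_2) :
  unitary U -> unit_vec v -> unit_vec (U *m v).
Proof.
rewrite /unitary /unit_vec => hU hv.
have hU' := mulmx1C hU.
by rewrite adjM -mulmxA (mulmxA (adj U)) hU' mul1mx.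
Qed.

Lemma MGP_le (R : realType) (alpha beta B : R) (U : 'M[R[i]]_2) : unitary U -> 0 <= B ->
  (forall k : 'I_6, Mpure alpha beta (U *m stab_ket R k) <= B) -> MGP alpha beta U <= B.
Proof.
move=> hU B0 hk; rewrite /MGP; apply: ge_sup.
  pose q : 'I_6 -> R := fun k => (k == ord0)%:R.
  exists (Mmix alpha beta (U *m (\sum_(k < 6) (q k)%:C *: Defs.proj (stab_ket R k)) *m adj U)).
  exists (\sum_(k < 6) (q k)%:C *: Defs.proj (stab_ket R k)); split => //.
  exists q; split; first by move=> k; rewrite /q ler0n.
  by split => //; rewrite big_ord_recl big1 /q ?eqxx ?addr0 // => i _.
move=> y [rho [[q [q0 [q1 ->]]] ->]].
rewrite /Mmix.
set S := (X in inf X).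
have hmem : S (\sum_(j < 6) q j * Mpure alpha beta (U *m stab_ket R j)).
  exists 6%N, q, (fun j => U *m stab_ket R j); split => //.
  split => //; split => //; split; first by move=> j; apply: unit_U => //; exact: stab_unit.
  rewrite mulmx_sumr mulmx_suml; apply: eq_bigr => k _.
  by rewrite -scalemxAr -scalemxAl /Defs.proj adjM !mulmxA.
have hsum : \sum_(j < 6) q j * Mpure alpha beta (U *m stab_ket R j) <= B.
  apply: le_trans (_ : _ <= \sum_(j < 6) q j * B) _.
    by apply: ler_sum => j _; apply: ler_wpM2l.
  by rewrite -big_distrl /= q1 mul1r.
case: (pselect (has_lbound S)) => [lb|nlb].
  exact: le_trans (ge_inf lb hmem) hsum.
by rewrite inf_out // => -[].
Qed.

Lemma Gc1 (R : realType) (alpha : R) : alpha != 0 -> Gc alpha 1 = 1.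
Proof.
move=> a0; rewrite /Gc subrr mul0r powR0 // addr0.
have -> : (1 + 1) / 2 = 1 :> R by field.
by rewrite powR1.
Qed.

Notation rr R := ((Num.sqrt (2:R))^-1).

Lemma hr2' (R : realType) : 2 * (rr R) ^+ 2 = 1.
Proof. by rewrite hr2; field. Qed.

Lemma Ustab_le (R : realType) (alpha beta a b x : R) : 1 < alpha -> beta != 0 ->
  a ^+ 2 + b ^+ 2 = 1 -> 0 <= a -> 0 <= Fb alpha beta (Gc alpha a) ->
  forall k : 'I_6, Mpure alpha beta (Umat a b *m stab_ket R k) <= Fb alpha beta (Gc alpha a).
Proof.
move=> a1 b0 hab a0 hB.
have al0 : alpha != 0 by rewrite gt_eqF // (lt_trans ltr01 a1).
have hr := hr2' R.
case=> [[|[|[|[|[|[|//]]]]]] hk]; rewrite /stab_ket /= Umul Mpure_eq /s2.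
- rewrite ge_min; apply/orP; left.
  rewrite (@Jab_val _ alpha beta _ _ _ _ a al0) //; rewrite /nrm /ovw /=.
  + by transitivity (a ^+ 2 + b ^+ 2); [ring | exact: hab].
  + by ring.
  + by ring.
- rewrite ge_min; apply/orP; right; rewrite ge_min; apply/orP; left.
  rewrite (@Jab_val _ alpha beta _ _ _ _ a al0) //; rewrite /nrm /ovw /=.
  + by transitivity (a ^+ 2 + b ^+ 2); [ring | exact: hab].
  + by ring.
  + by ring.
- do 2 (rewrite ge_min; apply/orP; right); rewrite ge_min; apply/orP; left.
  rewrite (@Jab_val _ alpha beta _ _ _ _ a al0) //; rewrite /nrm /ovw /=.
  + by transitivity (2 * (rr R) ^+ 2 * (a ^+ 2 + b ^+ 2)); [ring | rewrite hr hab mul1r].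
  + by transitivity (2 * (rr R) ^+ 2); [ring | rewrite hr].
  + by transitivity ((2 * (rr R) ^+ 2) ^+ 2 * a ^+ 2); [ring | rewrite hr expr1n mul1r].
- do 3 (rewrite ge_min; apply/orP; right); rewrite ge_min; apply/orP; left.
  rewrite (@Jab_val _ alpha beta _ _ _ _ a al0) //; rewrite /nrm /ovw /=.
  + by transitivity (2 * (rr R) ^+ 2 * (a ^+ 2 + b ^+ 2)); [ring | rewrite hr hab mul1r].
  + by transitivity (2 * (rr R) ^+ 2); [ring | rewrite hr].
  + by transitivity ((2 * (rr R) ^+ 2) ^+ 2 * a ^+ 2); [ring | rewrite hr expr1n mul1r].
- do 4 (rewrite ge_min; apply/orP; right); rewrite ge_min; apply/orP; left.
  rewrite (@Jab_val _ alpha beta _ _ _ _ 1 al0) ?Gc1 ?Fb1 //; rewrite /nrm /ovw /=.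
  + by transitivity (2 * (rr R) ^+ 2 * (a ^+ 2 + b ^+ 2)); [ring | rewrite hr hab mul1r].
  + by transitivity (2 * (rr R) ^+ 2); [ring | rewrite hr].
  + by transitivity ((2 * (rr R) ^+ 2) ^+ 2 * (a ^+ 2 + b ^+ 2)); [ring | rewrite hr hab expr1n mul1r].
- do 5 (rewrite ge_min; apply/orP; right); rewrite ge_min; apply/orP; left.
  rewrite (@Jab_val _ alpha beta _ _ _ _ 1 al0) ?Gc1 ?Fb1 //; rewrite /nrm /ovw /=.
  + by transitivity (2 * (rr R) ^+ 2 * (a ^+ 2 + b ^+ 2)); [ring | rewrite hr hab mul1r].
  + by transitivity (2 * (rr R) ^+ 2); [ring | rewrite hr].
  + by transitivity ((2 * (rr R) ^+ 2) ^+ 2 * (a ^+ 2 + b ^+ 2)); [ring | rewrite hr hab expr1n mul1r].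
Qed.

Lemma le_eq_trans (R : realType) (x y z : R) : x = y -> y <= z -> x <= z.
Proof. by move=> ->. Qed.

Lemma Upsi_lb (R : realType) (alpha beta a b x Gn : R) : 1 < alpha -> alpha <= 2 -> beta != 0 ->
  a ^+ 2 = 1 - x -> b ^+ 2 = x -> 0 <= a -> a <= 1 -> 0 <= b -> b <= 1/10 -> 0 <= x -> x <= 1/100 ->
  Gc alpha (1 - 2 * x) <= Gn -> 1 - (alpha - 1) / 50 <= Gn ->
  Fb alpha beta Gn <= Mpure alpha beta (ket (a%:C * a%:C + (- b)%:C * b%:C) (b%:C * a%:C + a%:C * b%:C)).
Proof.
move=> a1 a2 b0 ha hb a0 a1' b0' b1 x0 x1 hG0 hG.
have al0 : alpha != 0 by rewrite gt_eqF // (lt_trans ltr01 a1).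
have hr := hr2 R.
have hab : a ^+ 2 + b ^+ 2 = 1 by rewrite ha hb subrK.
have hn : nrm (a%:C * a%:C + (- b)%:C * b%:C) (b%:C * a%:C + a%:C * b%:C) = 1.
  rewrite /nrm /=; transitivity ((a ^+ 2 + b ^+ 2) ^+ 2); first by ring.
  by rewrite hab expr1n.
have hab0 : 0 <= a * b by apply: mulr_ge0.
have hab1 : a * b <= 1/10.
  have := ler_pM a0 b0' a1' b1; lra.
have hJ0 : Fb alpha beta Gn <= Jab alpha beta (Defs.proj (ket (a%:C * a%:C + (- b)%:C * b%:C) (b%:C * a%:C + a%:C * b%:C))) (Defs.proj (ket 1 0)).
  rewrite (@Jab_val _ alpha beta _ _ _ _ (1 - 2 * x) al0) //.
  - apply: Fb_anti => //; apply: Gc_gt0; lra.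
  - by rewrite /nrm /=; ring.
  - rewrite /ovw /=; transitivity ((a ^+ 2 - b ^+ 2) ^+ 2); first by ring.
    by rewrite ha hb; ring.
  - lra.
rewrite Mpure_eq /s2 !le_min; repeat (apply/andP; split).
- exact: hJ0.
- apply: Jab_lb => //; first by rewrite /nrm /=; ring.
  rewrite /ovw /=; apply: (le_eq_trans (y := 4 * a ^+ 2 * b ^+ 2)); first by ring.
  rewrite ha hb; nra.
- apply: Jab_lb => //; first by rewrite /nrm /=; transitivity (2 * (rr R) ^+ 2); [ring | rewrite hr; field].
  rewrite /ovw /=; apply: (le_eq_trans (y := (rr R) ^+ 2 * (a ^+ 2 - b ^+ 2 + 2 * (a * b)) ^+ 2)); first by ring.
  rewrite hr ha hb.
  have ht0 : 0 <= 1 - x - x + 2 * (a * b) by lra.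
  have ht1 : 1 - x - x + 2 * (a * b) <= 6/5 by lra.
  have := ler_pM ht0 ht0 ht1 ht1; rewrite -expr2; lra.
- apply: Jab_lb => //; first by rewrite /nrm /=; transitivity (2 * (rr R) ^+ 2); [ring | rewrite hr; field].
  rewrite /ovw /=; apply: (le_eq_trans (y := (rr R) ^+ 2 * (a ^+ 2 - b ^+ 2 - 2 * (a * b)) ^+ 2)); first by ring.
  rewrite hr ha hb.
  have ht0 : 0 <= 1 - x - x - 2 * (a * b) by lra.
  have ht1 : 1 - x - x - 2 * (a * b) <= 1 by lra.
  have := ler_pM ht0 ht0 ht1 ht1; rewrite -expr2; lra.
- apply: Jab_lb => //; first by rewrite /nrm /=; transitivity (2 * (rr R) ^+ 2); [ring | rewrite hr; field].
  rewrite /ovw /=; apply: (le_eq_trans (y := (rr R) ^+ 2 * (a ^+ 2 + b ^+ 2) ^+ 2)); first by ring.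
  rewrite hr hab; lra.
- apply: Jab_lb => //; first by rewrite /nrm /=; transitivity (2 * (rr R) ^+ 2); [ring | rewrite hr; field].
  rewrite /ovw /=; apply: (le_eq_trans (y := (rr R) ^+ 2 * (a ^+ 2 + b ^+ 2) ^+ 2)); first by ring.
  rewrite hr hab; lra.
- exact: hJ0.
Qed.

Lemma fin (R : realType) (m u p B F : R) : m <= B -> F <= u -> p <= B -> 2 * B < F -> m < u - p.
Proof. move=> h1 h2 h3 h4; lra. Qed.

Theorem proposition5 (R : realType) (alpha beta : R) :
  1 < alpha -> alpha < 2 -> beta < 1 -> beta != 0 ->
  exists (U0 : 'M[R[i]]_2) (psi0 : 'cV[R[i]]_2),
    unitary U0 /\ unit_vec psi0 /\
    Mpure alpha beta (U0 *m psi0) - Mpure alpha beta psi0 > MGP alpha beta U0.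
Proof.
move=> a1 a2 b1 b0.
have a2' : alpha <= 2 := ltW a2.
have s0 : 0 < alpha - 1 by rewrite subr_gt0.
have s1 : alpha - 1 <= 1 by lra.
have [x0 [xs xp]] := xfacts s0 s1.
set x := ((1/100) * (alpha - 1)) `^ ((alpha - 1)^-1) in x0 xs xp.
have x1 : x <= 1/100 by lra.
set a := Num.sqrt (1 - x); set b := Num.sqrt x.
have ha : a ^+ 2 = 1 - x by rewrite sqr_sqrtr //; lra.
have hb : b ^+ 2 = x by rewrite sqr_sqrtr // ltW.
have a0 : 0 <= a := sqrtr_ge0 _.
have b0' : 0 <= b := sqrtr_ge0 _.
have hab : a ^+ 2 + b ^+ 2 = 1 by rewrite ha hb subrK.
have a1le : a <= 1 by nra.
have b1' : b <= 1/10 by nra.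
have ya : 1 - x / 2 - x ^+ 2 / 2 <= a.
  have y0 : 0 <= 1 - x / 2 - x ^+ 2 / 2 by nra.
  have hy : (1 - x / 2 - x ^+ 2 / 2) ^+ 2 <= a ^+ 2.
    rewrite ha.
    have e : 1 - x - (1 - x / 2 - x ^+ 2 / 2) ^+ 2 = x ^+ 2 * (3/4 - x / 2 - x ^+ 2 / 4) by field.
    have : 0 <= x ^+ 2 * (3/4 - x / 2 - x ^+ 2 / 4) by apply: mulr_ge0; [exact: sqr_ge0 | nra].
    lra.
  nra.
set G1 := Gc alpha a.
set Gn := (1 - x) * (1 - (alpha - 1) * x) + x * ((1/100) * (alpha - 1)).
have hG1le : G1 <= 1.
  apply: le_trans (Gc_le a1 a2' a0 a1le) _.
  have : 0 <= (alpha - 1) * ((1 - a) / 2) by apply: mulr_ge0; lra.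
  lra.
have hG1ge : 1 - alpha * ((1 - a) / 2) <= G1 by apply: Gc_ge; lra.
have hG1pos : 0 < G1 by apply: Gc_gt0; lra.
have hkey : 2 * (1 - G1) < G1 * (1 - Gn).
  apply: (key_ineq a1 a2' x0 x1 _ _ hG1ge hG1le); first by lra.
  have : x ^+ 2 = x * x by rewrite expr2.
  lra.
have hGnpos : 0 < Gn.
  have h1 : 0 < 1 - x by lra.
  have h2 : 0 < 1 - (alpha - 1) * x by nra.
  have h3 : 0 <= x * ((1/100) * (alpha - 1)) by apply: mulr_ge0; lra.
  have := mulr_gt0 h1 h2; rewrite /Gn; lra.
have hmain := Fb_main a1 b1 b0 hGnpos hG1pos hG1le hkey.
have hB0 : 0 <= Fb alpha beta G1 by rewrite -(Fb1 alpha beta); exact: Fb_anti.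
have hG0 : Gc alpha (1 - 2 * x) <= Gn.
  rewrite /Gc.
  have -> : (1 + (1 - 2 * x)) / 2 = 1 - x by field.
  have -> : (1 - (1 - 2 * x)) / 2 = x by field.
  have al0 : 0 < alpha by lra.
  rewrite -(mulr_powRB1 (_ : 0 <= 1 - x) al0); last by lra.
  rewrite -(mulr_powRB1 (ltW x0) al0) xp.
  have hbern := bern_le (_ : 0 <= 1 - x) s0 s1.
  have := hbern ltac:(lra).
  move=> hb2; rewrite /Gn lerD2r; apply: ler_wpM2l; first by lra.
  apply: le_trans hb2 _; rewrite le_eqVlt; apply/orP; left; apply/eqP; ring.
have hGn50 : 1 - (alpha - 1) / 50 <= Gn.
  have e : Gn = 1 - alpha * x + (alpha - 1) * (x * x) + x * ((1/100) * (alpha - 1)) by rewrite /Gn; field.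
  have h1 : 0 <= (alpha - 1) * (x * x) by apply: mulr_ge0; nra.
  have h2 : 0 <= x * ((1/100) * (alpha - 1)) by apply: mulr_ge0; lra.
  have h3 : alpha * x <= 2 * x by nra.
  rewrite e; lra.
exists (Umat a b), (ket a%:C b%:C).
split; first exact: Umat_unitary hab.
split.
  apply: unit_ket; rewrite /nrm /=; transitivity (a ^+ 2 + b ^+ 2); [ring | exact: hab].
rewrite Umul.
have hU := @Upsi_lb R alpha beta a b x Gn a1 a2' b0 ha hb a0 a1le b0' b1' (ltW x0) x1 hG0 hGn50.
have al0 : alpha != 0 by rewrite gt_eqF //; lra.
have hP : Mpure alpha beta (ket a%:C b%:C) <= Fb alpha beta G1.
  rewrite Mpure_eq ge_min; apply/orP; left.
  rewrite (@Jab_val _ alpha beta _ _ _ _ a al0) //; rewrite /nrm /ovw /=.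
  + by transitivity (a ^+ 2 + b ^+ 2); [ring | exact: hab].
  + by ring.
  + by ring.
have hM : MGP alpha beta (Umat a b) <= Fb alpha beta G1.
  apply: (MGP_le (Umat_unitary hab) hB0).
  exact: Ustab_le a1 b0 hab a0 hB0.
exact: fin hM hU hP hmain.
Qed.
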